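(* Let $(\mathcal M,g)$ be a compact Riemannian manifold without boundary, $\alpha>0$, $s\in\mathbb R$, $\gamma>0$ and $\Lambda>0$. Let $\mathcal S_g:=(\Delta_H+\alpha I)^{-1}=m_\star(\Delta_H)$ with $m_\star(\lambda)=(\lambda+\alpha)^{-1}$. Let $\Pi_{\le\Lambda}$ be the $L^2$-orthogonal spectral projector onto the direct sum of eigenspaces of $\Delta_H$ with eigenvalues $\le\Lambda$. For any parameterized (bounded) multiplier $m_\theta:[0,\infty)\to\mathbb R$ define $\widehat{\mathcal S}_{\theta,\Lambda}:=m_\theta(\Delta_H)\Pi_{\le\Lambda}$ and $\varepsilon_\Lambda(\theta):=\sup_{0\le\lambda\le\Lambda}|m_\theta(\lambda)-m_\star(\lambda)|$. Then there exists $C_\alpha<\infty$ depending only on $\alpha$ such that $$\|\mathcal S_g-\widehat{\mathcal S}_{\theta,\Lambda}\|_{H^{s-1+\gamma}\to H^{s+1}}\le C_\alpha(1+\Lambda)^{-\gamma/2}+(1+\Lambda)\,\varepsilon_\Lambda(\theta).$$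
   Context: $\Delta_H=d\delta+\delta d$ is the Hodge Laplacian on $1$-forms of $(\mathcal M,g)$, with $L^2$-orthonormal eigenbasis $\{\psi_k\}$ and eigenvalues $\lambda_k\ge0$, $\lambda_k\to\infty$. For a bounded function $m$, $m(\Delta_H)\omega=\sum_k m(\lambda_k)\langle\omega,\psi_k\rangle_{L^2}\psi_k$. Sobolev norms are defined spectrally: $\|\omega\|^2_{H^r\Omega^1}=\sum_{k}(1+\lambda_k)^r|\langle\omega,\psi_k\rangle_{L^2}|^2$. *)

(* Defs.v *)
(* Spectral model of the Hodge Laplacian on 1-forms:
   a 1-form omega is identified with its coefficient sequence
   c k = <omega, psi_k>_{L^2} in the L^2-orthonormal eigenbasis {psi_k},
   with eigenvalues lam k >= 0, lam k -> +oo. *)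
From Stdlib Require Import Reals.
From Coquelicot Require Import Coquelicot.
Open Scope R_scope.

Definition spectral_data (lam : nat -> R) : Prop :=
  (forall k, 0 <= lam k) /\ is_lim_seq lam p_infty.

Definition form := nat -> R.

Definition sob_terms (lam : nat -> R) (r : R) (c : form) : nat -> R :=
  fun k => Rpower (1 + lam k) r * (c k) ^ 2.
Definition in_H (lam : nat -> R) (r : R) (c : form) : Prop :=
  ex_series (sob_terms lam r c).
Definition sob_norm (lam : nat -> R) (r : R) (c : form) : R :=
  sqrt (Series (sob_terms lam r c)).

Definition mult_op (lam : nat -> R) (m : R -> R) (c : form) : form :=
  fun k => m (lam k) * c k.

Definition proj_le (lam : nat -> R) (Lam : R) (c : form) : form :=
  fun k => if Rle_dec (lam k) Lam then c k else 0.

Definition m_star (alpha : R) (x : R) : R := / (x + alpha).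
Definition S_g (lam : nat -> R) (alpha : R) : form -> form :=
  mult_op lam (m_star alpha).

Definition S_hat (lam : nat -> R) (m : R -> R) (Lam : R) : form -> form :=
  fun c => mult_op lam m (proj_le lam Lam c).

Definition eps_Lam (alpha : R) (m : R -> R) (Lam : R) : Rbar :=
  Lub_Rbar (fun y => exists x, 0 <= x <= Lam /\ y = Rabs (m x - m_star alpha x)).

Definition op_norm (lam : nat -> R) (a b : R) (T : form -> form) : Rbar :=
  Lub_Rbar (fun y => exists c, in_H lam a c /\ sob_norm lam a c <= 1 /\
                      in_H lam b (T c) /\ y = sob_norm lam b (T c)).

Definition maps_into (lam : nat -> R) (a b : R) (T : form -> form) : Prop :=
  forall c, in_H lam a c -> in_H lam b (T c).

Definition minus_op (T U : form -> form) : form -> form :=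
  fun c k => T c k - U c k.

(* Main.v *)
Require Import Defs.
From Stdlib Require Import Reals Lra.
From Coquelicot Require Import Coquelicot.
Open Scope R_scope.

Lemma exp_mono (x y : R) : x <= y -> exp x <= exp y.
Proof.
  intros H. destruct (Rle_lt_or_eq_dec _ _ H) as [H1|H1].
  - left. now apply exp_increasing.
  - subst; lra.
Qed.

Lemma rpow_neg_mono (x y g : R) : 0 < x -> x <= y -> 0 <= g ->
  Rpower y (- g) <= Rpower x (- g).
Proof.
  intros Hx Hxy Hg. unfold Rpower. apply exp_mono.
  assert (ln x <= ln y) by (apply ln_le; lra). nra.
Qed.

Lemma rpow_neg_le1 (x g : R) : 1 <= x -> 0 <= g -> Rpower x (- g) <= 1.
Proof.
  intros Hx Hg. rewrite <- (Rpower_O x) by lra. unfold Rpower. apply exp_mono.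
  assert (ln 1 <= ln x) by (apply ln_le; lra). rewrite ln_1 in H. nra.
Qed.

Lemma rpow_pos (x y : R) : 0 < Rpower x y.
Proof. unfold Rpower. apply exp_pos. Qed.

Lemma generic (lam : nat -> R) (a b K : R) (T : form -> form) (d : nat -> R) :
  0 <= K ->
  (forall c k, T c k = d k * c k) ->
  (forall k, Rpower (1 + lam k) b * (d k)^2 <= K^2 * Rpower (1 + lam k) a) ->
  maps_into lam a b T /\ Rbar_le (op_norm lam a b T) (Finite K).
Proof.
  intros HK HT Hd.
  assert (Hle : forall c k, 0 <= sob_terms lam b (T c) k <= K^2 * sob_terms lam a c k).
  { intros c k. unfold sob_terms. rewrite HT. split.
    - apply Rmult_le_pos; [left; apply rpow_pos | apply pow2_ge_0].
    - specialize (Hd k). replace ((d k * c k)^2) with ((d k)^2 * (c k)^2) by ring.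
      assert (0 <= (c k)^2) by nra. nra. }
  assert (Hex : forall c, in_H lam a c -> in_H lam b (T c)).
  { intros c Hc. unfold in_H. apply (@ex_series_le R_AbsRing R_CompleteNormedModule _ (fun k => K^2 * sob_terms lam a c k)).
    - intros n. unfold norm; simpl. unfold abs; simpl. rewrite Rabs_pos_eq by apply (Hle c n).
      apply Hle.
    - apply (ex_series_scal_l (K^2) (sob_terms lam a c)). exact Hc. }
  split; [exact Hex|].
  destruct (Lub_Rbar_correct (fun y => exists c, in_H lam a c /\ sob_norm lam a c <= 1 /\
                      in_H lam b (T c) /\ y = sob_norm lam b (T c))) as [_ Hlub].
  apply Hlub. intros y [c [Hc [Hn [Hb ->]]]]. simpl.
  unfold sob_norm in *.
  assert (Hs : Series (sob_terms lam b (T c)) <= K^2 * Series (sob_terms lam a c)).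
  { rewrite <- Series_scal_l. apply Series_le; [apply Hle|].
    apply (ex_series_scal_l (K^2) (sob_terms lam a c)). exact Hc. }
  assert (H0 : 0 <= Series (sob_terms lam a c)).
  { assert (Series (fun n => 0 * sob_terms lam a c n) <= Series (sob_terms lam a c)).
    { apply Series_le; [|exact Hc]. intros n. rewrite Rmult_0_l. split; [lra|].
      unfold sob_terms. apply Rmult_le_pos; [left; apply rpow_pos | apply pow2_ge_0]. }
    rewrite Series_scal_l in H; lra. }
  assert (H1 : sqrt (Series (sob_terms lam a c)) <= 1) by exact Hn.
  apply Rle_trans with (sqrt (K^2 * Series (sob_terms lam a c))).
  - apply sqrt_le_1_alt. exact Hs.
  - rewrite sqrt_mult_alt by nra. replace (K^2) with (K*K) by ring.
    rewrite sqrt_square by lra.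
    assert (0 <= sqrt (Series (sob_terms lam a c))) by apply sqrt_pos. nra.
Qed.

Theorem theorem4p4 :
  forall alpha : R, 0 < alpha ->
  exists C_alpha : R,
  forall (lam : nat -> R), spectral_data lam ->
  forall (s gamma Lam : R), 0 < gamma -> 0 < Lam ->
  forall (m : R -> R), (exists B, forall x, 0 <= x -> Rabs (m x) <= B) ->
    maps_into lam (s - 1 + gamma) (s + 1) (minus_op (S_g lam alpha) (S_hat lam m Lam)) /\
    Rbar_le (op_norm lam (s - 1 + gamma) (s + 1) (minus_op (S_g lam alpha) (S_hat lam m Lam)))
            (Rbar_plus (Finite (C_alpha * Rpower (1 + Lam) (- gamma / 2)))
                       (Rbar_mult (Finite (1 + Lam)) (eps_Lam alpha m Lam))).
Proof.
  intros alpha Ha. exists (1 + / alpha).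
  intros lam [Hlam _] s gamma Lam Hg HL m [B HB].
  set (E := fun y => exists x, 0 <= x <= Lam /\ y = Rabs (m x - m_star alpha x)).
  destruct (Lub_Rbar_correct E) as [Hub Hlub].
  assert (Hfin : exists e, eps_Lam alpha m Lam = Finite e /\ 0 <= e /\
     forall x, 0 <= x <= Lam -> Rabs (m x - m_star alpha x) <= e).
  { unfold eps_Lam. fold E.
    assert (Hlo : Rbar_le (Finite (Rabs (m 0 - m_star alpha 0))) (Lub_Rbar E)).
    { apply Hub. exists 0. split; [lra|reflexivity]. }
    assert (Hhi : Rbar_le (Lub_Rbar E) (Finite (B + / alpha))).
    { apply Hlub. intros y [x [Hx ->]]. simpl.
      unfold m_star. specialize (HB x (proj1 Hx)).
      assert (0 < / (x + alpha)) by (apply Rinv_0_lt_compat; lra).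
      assert (/ (x + alpha) <= / alpha) by (apply Rinv_le_contravar; lra).
      pose proof (Rabs_triang (m x) (- / (x + alpha))). rewrite Rabs_Ropp in H1.
      rewrite (Rabs_pos_eq (/ (x + alpha))) in H1 by lra. unfold Rminus. lra. }
    destruct (Lub_Rbar E) as [e| |] eqn:He; simpl in Hlo, Hhi; try contradiction.
    exists e. split; [reflexivity|]. split.
    - pose proof (Rabs_pos (m 0 - m_star alpha 0)). lra.
    - intros x Hx. assert (Hx' : Rbar_le (Finite (Rabs (m x - m_star alpha x))) (Finite e)).
      { apply Hub. exists x. split; [exact Hx|reflexivity]. }
      exact Hx'. }
  destruct Hfin as [e [He [He0 Hem]]]. rewrite He.
  set (A := Rpower (1 + Lam) (- gamma / 2)).
  assert (HA : 0 < A) by apply rpow_pos.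
  set (K := (1 + / alpha) * A + (1 + Lam) * e).
  assert (Hia : 0 < / alpha) by (apply Rinv_0_lt_compat; lra).
  assert (HK0 : 0 <= K) by (unfold K; nra).
  set (d := fun k => if Rle_dec (lam k) Lam then m_star alpha (lam k) - m (lam k)
                     else m_star alpha (lam k)).
  assert (Hgen := generic lam (s - 1 + gamma) (s + 1) K
     (minus_op (S_g lam alpha) (S_hat lam m Lam)) d HK0).
  destruct Hgen as [Hmap Hop].
  - intros c k. unfold minus_op, S_g, S_hat, mult_op, proj_le, d.
    destruct (Rle_dec (lam k) Lam); ring.
  - intros k. pose proof (Hlam k) as Hk.
    assert (Hx : 0 < 1 + lam k) by lra.
    replace (s + 1) with ((s - 1 + gamma) + (INR 2 + - gamma)) by (simpl; ring).
    rewrite (Rpower_plus (s - 1 + gamma)), (Rpower_plus (INR 2)), Rpower_pow by exact Hx.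
    assert (HP : 0 < Rpower (1 + lam k) (s - 1 + gamma)) by apply rpow_pos.
    assert (Hq : 0 < Rpower (1 + lam k) (- gamma)) by apply rpow_pos.
    assert (Hmain : (1 + lam k)^2 * Rpower (1 + lam k) (- gamma) * (d k)^2 <= K^2).
    { unfold d. destruct (Rle_dec (lam k) Lam) as [Hl|Hl].
      - assert (Hq1 : Rpower (1 + lam k) (- gamma) <= 1) by (apply rpow_neg_le1; lra).
        assert (Hd : Rabs (m_star alpha (lam k) - m (lam k)) <= e).
        { rewrite Rabs_minus_sym. apply Hem. lra. }
        assert (Hd2 : (m_star alpha (lam k) - m (lam k))^2 <= e^2).
        { rewrite <- pow2_abs. pose proof (Rabs_pos (m_star alpha (lam k) - m (lam k))). nra. }
        assert (H2 : (1 + lam k)^2 <= (1 + Lam)^2) by nra.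
        assert (0 <= (m_star alpha (lam k) - m (lam k))^2) by apply pow2_ge_0.
        assert ((1 + lam k)^2 * Rpower (1 + lam k) (- gamma) * (m_star alpha (lam k) - m (lam k))^2
                <= (1 + lam k)^2 * 1 * (m_star alpha (lam k) - m (lam k))^2).
        { apply Rmult_le_compat_r; [nra|]. apply Rmult_le_compat_l; nra. }
        assert (((1 + Lam) * e)^2 <= K^2).
        { unfold K. assert (0 <= (1 + Lam) * e) by nra. assert (0 <= (1 + / alpha) * A) by nra. nra. }
        nra.
      - assert (Hl' : Lam < lam k) by lra.
        unfold m_star.
        assert (Hr : (1 + lam k) * / (lam k + alpha) <= 1 + / alpha).
        { apply Rmult_le_reg_r with (lam k + alpha); [lra|].
          rewrite Rmult_assoc, Rinv_l by lra.
          replace ((1 + / alpha) * (lam k + alpha)) with (lam k + alpha + lam k / alpha + 1) by (field; lra).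
          assert (0 <= lam k / alpha) by (apply Rdiv_le_0_compat; lra). lra. }
        assert (Hr0 : 0 <= (1 + lam k) * / (lam k + alpha)).
        { assert (0 < / (lam k + alpha)) by (apply Rinv_0_lt_compat; lra). nra. }
        assert (Hqa : Rpower (1 + lam k) (- gamma) <= A * A).
        { unfold A. rewrite <- Rpower_plus. replace (- gamma / 2 + - gamma / 2) with (- gamma) by field.
          apply rpow_neg_mono; lra. }
        replace ((1 + lam k) ^ 2 * Rpower (1 + lam k) (- gamma) * (/ (lam k + alpha)) ^ 2)
          with (((1 + lam k) * / (lam k + alpha))^2 * Rpower (1 + lam k) (- gamma)) by ring.
        assert (((1 + lam k) * / (lam k + alpha))^2 <= (1 + / alpha)^2) by nra.
        assert (((1 + / alpha) * A)^2 <= K^2).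
        { unfold K. assert (0 <= (1 + Lam) * e) by nra. assert (0 <= (1 + / alpha) * A) by nra. nra. }
        assert (((1 + lam k) * / (lam k + alpha))^2 * Rpower (1 + lam k) (- gamma)
                <= (1 + / alpha)^2 * (A * A)).
        { apply Rmult_le_compat; nra. }
        nra. }
    assert (Hp : Rpower (1 + lam k) (s - 1 + gamma) * ((1 + lam k)^2 * Rpower (1 + lam k) (- gamma) * (d k)^2)
                 <= Rpower (1 + lam k) (s - 1 + gamma) * K^2).
    { apply Rmult_le_compat_l; lra. }
    nra.
  - split; [exact Hmap|].
    eapply Rbar_le_trans; [exact Hop|]. simpl. unfold K, A. lra.
Qed.
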